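(* Let $m\ge5$ be odd, $h=\frac{m-1}{2}$, $A=\{1,2,\dots,2^{h-1}-1\}$. For any $i\in A$ and $j\in\Gamma_{(h)}$: (i) $C_{i+2^h}\cap C_{j+2^{h+1}}\neq\emptyset$ only if $(i,j)=(1,1)$; moreover $C_j\cap C_{j+2^{h+1}}=\emptyset$. (ii) $$C_{i+2^h}\cap C_j=\begin{cases}C_j,&\text{if }(i,j)=(2^s i_1,\ i_1+2^{h-s})\text{ for some } i_1\in\Gamma_{(h-1-s)}\text{ and } s\in\{1,2,\dots,h-2\},\\ \emptyset,&\text{otherwise.}\end{cases}$$
   Context: Let $v=2^m-1$. For an integer $i$, $C_i=\{i\cdot 2^s \bmod v: s\ge 0\}$ is the $2$-cyclotomic coset of $i$ modulo $v$. For a positive integer $t$, $\Gamma_{(t)}=\{j:1\le j\le 2^t-1,\ j\text{ odd}\}$. *)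

(* Defs.v *)
From mathcomp Require Import all_boot.
Set Implicit Arguments. Unset Strict Implicit. Unset Printing Implicit Defensive.

Definition cyc_v (m : nat) : nat := 2 ^ m - 1.

Definition cyc_coset (m i : nat) : nat -> Prop :=
  fun x => exists s : nat, x = (i * 2 ^ s) %% cyc_v m.

Definition Gamma (t j : nat) : bool := [&& odd j, 1 <= j & j <= 2 ^ t - 1].

Definition cosets_meet (m a b : nat) : Prop :=
  exists x, cyc_coset m a x /\ cyc_coset m b x.

Definition cosets_disjoint (m a b : nat) : Prop :=
  forall x, ~ (cyc_coset m a x /\ cyc_coset m b x).

Definition cap_eq_right (m a b : nat) : Prop :=
  forall x, (cyc_coset m a x /\ cyc_coset m b x) <-> cyc_coset m b x.

(* Main.v *)
Require Import Defs.
From mathcomp Require Import all_boot zify.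

Lemma v_eq m : 2 ^ m = cyc_v m + 1.
Proof. by rewrite /cyc_v subnK // expn_gt0. Qed.

Lemma pow_mk m k : 2 ^ (m * k) = 1 %[mod cyc_v m].
Proof. by rewrite expnM -modnXm v_eq (modnDl 1 (cyc_v m)) modnXm exp1n. Qed.

Lemma exp_red m a n : 0 < m -> a * 2 ^ n = a * 2 ^ (n %% m) %[mod cyc_v m].
Proof.
move=> m0; rewrite {1}(divn_eq n m) expnD mulnC (mulnC (n %/ m)) -mulnA.
by rewrite -modnMml pow_mk modnMml mul1n mulnC.
Qed.

Lemma norm_cyc m a b s t : 0 < m -> b < cyc_v m ->
  (a * 2 ^ s) %% cyc_v m = (b * 2 ^ t) %% cyc_v m ->
  exists e, e < m /\ b = (a * 2 ^ e) %% cyc_v m.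
Proof.
move=> m0 bv H; exists ((s + (m * t - t)) %% m); split; first by rewrite ltn_mod.
have tk : t + (m * t - t) = m * t.
  rewrite subnKC //; rewrite leq_pmull //.
rewrite -exp_red //.
rewrite expnD mulnA -modnMml H modnMml -mulnA -expnD tk.
by rewrite -modnMmr pow_mk modnMmr muln1 modn_small.
Qed.

Lemma rot_cyc m a e : a < cyc_v m -> e < m ->
  (a * 2 ^ e) %% cyc_v m = (a %% 2 ^ (m - e)) * 2 ^ e + a %/ 2 ^ (m - e).
Proof.
move=> av em.
set u := m - e.
have mue : 2 ^ m = 2 ^ u * 2 ^ e by rewrite -expnD /u subnK // ltnW.
have P0 : 0 < 2 ^ u by rewrite expn_gt0.
have Q0 : 0 < 2 ^ e by rewrite expn_gt0.
set P := 2 ^ u in mue P0 *; set Q := 2 ^ e in mue Q0 *.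
have av' : a < P * Q - 1 by move: av; rewrite /cyc_v mue.
set hi := a %/ P; set lo := a %% P.
have ha : a = hi * P + lo by rewrite /hi /lo -divn_eq.
have lP : lo < P by rewrite ltn_mod.
have hQ : hi < Q by rewrite ltn_divLR // mulnC; lia.
have -> : a * Q = hi * cyc_v m + (hi + lo * Q).
  rewrite /cyc_v mue ha; nia.
rewrite modnMDl modn_small; first by rewrite addnC.
rewrite /cyc_v mue.
have [lo1|lo1] := ltnP lo (P - 1).
  have : lo * Q <= (P - 2) * Q by rewrite leq_mul2r; apply/orP; right; lia.
  nia.
have hi2 : hi * P < (Q - 1) * P by nia.
rewrite ltn_pmul2r // in hi2.
have : lo * Q <= (P - 1) * Q by rewrite leq_mul2r; apply/orP; right; lia.
nia.
Qed.

Theorem lemma10 (m : nat) (Hm5 : 5 <= m) (Hodd : odd m) :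
  let h := (m - 1) %/ 2 in
  forall i j : nat, 1 <= i <= 2 ^ (h - 1) - 1 -> Gamma h j ->
  ((cosets_meet m (i + 2 ^ h) (j + 2 ^ h.+1) -> i = 1 /\ j = 1) /\
   cosets_disjoint m j (j + 2 ^ h.+1)) /\
  (let cond := exists s i1 : nat,
       [/\ 1 <= s <= h - 2, Gamma (h - 1 - s) i1,
           i = 2 ^ s * i1 & j = i1 + 2 ^ (h - s)] in
   (cond -> cap_eq_right m (i + 2 ^ h) j) /\
   (~ cond -> cosets_disjoint m (i + 2 ^ h) j)).
Proof.
move=> h i j /andP[i1 iA] /and3P[jodd j1 jG].
have m2 : m = 2 * h + 1 by rewrite /h; lia.
clearbody h.
have h2 : 2 <= h by lia.
have m0 : 0 < m by lia.
have eP1 : 2 ^ h.+1 = 2 * 2 ^ h by rewrite expnS.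
have eP2 : 2 ^ h.+2 = 4 * 2 ^ h by rewrite !expnS mulnA.
have eP0 : 2 ^ (h - 1) * 2 = 2 ^ h by rewrite -expnSr; congr (_ ^ _); lia.
have ev : 2 ^ h.+2 <= cyc_v m + 1 by rewrite -v_eq leq_exp2l //; lia.
have P4 : 4 <= 2 ^ h by rewrite (_ : 4 = 2 ^ 2) // leq_exp2l.
set P := 2 ^ h in eP1 eP2 eP0 P4 jG *.
have av : i + P < cyc_v m by lia.
have jv : j < cyc_v m by lia.
have bv : j + 2 ^ h.+1 < cyc_v m by lia.
split; [split|split].
-
  move=> [x [[s xs] [t xt]]].
  have : ((i + P) * 2 ^ s) %% cyc_v m = ((j + 2 ^ h.+1) * 2 ^ t) %% cyc_v m by rewrite -xs -xt.
  case/norm_cyc => // e [em je]; rewrite rot_cyc // in je.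
  have [eh|eh] := leqP e h.
    have : 2 ^ h.+1 <= 2 ^ (m - e) by rewrite leq_exp2l //; lia.
    move=> hu; rewrite modn_small ?divn_small ?addn0 in je; try lia.
    clear hu; case: e eh em je => [|[|e]] eh em je.
    + rewrite expn0 muln1 in je; lia.
    + rewrite expn1 in je; have ji : j = 2 * i by lia.
      by move: jodd; rewrite ji oddM.
    + have : (i + P) * 4 <= (i + P) * 2 ^ e.+2.
        by rewrite leq_mul2l (_ : 4 = 2 ^ 2) // leq_exp2l // orbT.
      lia.
  have [eh1|eh1] := leqP e h.+1.
    have ee : e = h.+1 by lia.
    rewrite ee (_ : m - h.+1 = h) in je; last by lia.
    rewrite (_ : i + P = 1 * P + i) ?modnMDl ?modn_small ?divnMDl ?divn_small ?addn0 in je;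
      try lia.
    have [i2|i2] := leqP 2 i.
      have : 2 * 2 ^ h.+1 <= i * 2 ^ h.+1 by rewrite leq_mul2r i2 orbT.
      lia.
    have ie : i = 1 by lia.
    rewrite ie mul1n in je; lia.
  set u := m - e in je.
  have ge : 2 ^ h.+2 <= 2 ^ e by rewrite leq_exp2l.
  case: (posnP ((i + P) %% 2 ^ u)) => lo0.
    rewrite lo0 mul0n add0n in je.
    have := leq_div (i + P) (2 ^ u); lia.
  have : 2 ^ e <= j + 2 ^ h.+1.
    by rewrite je; apply: leq_trans (leq_addr _ _); rewrite leq_pmull.
  clear je lo0 xs xt; lia.
-
  move=> x [[s xs] [t xt]].
  have : (j * 2 ^ s) %% cyc_v m = ((j + 2 ^ h.+1) * 2 ^ t) %% cyc_v m by rewrite -xs -xt.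
  case/norm_cyc => // e [em je]; rewrite rot_cyc // in je.
  have [eh|eh] := leqP e h.+1.
    have : P <= 2 ^ (m - e) by rewrite leq_exp2l //; lia.
    move=> hu; rewrite modn_small ?divn_small ?addn0 in je; try lia.
    clear hu; case: e eh em je => [|e] eh em je.
      rewrite expn0 muln1 in je; have := expn_gt0 2 h.+1; lia.
    have : odd (j * 2 ^ e.+1) by rewrite -je oddD jodd oddX.
    by rewrite oddM oddX andbF.
  set u := m - e in je.
  have ge : 2 ^ h.+2 <= 2 ^ e by rewrite leq_exp2l.
  case: (posnP (j %% 2 ^ u)) => lo0.
    rewrite lo0 mul0n add0n in je.
    have := leq_div j (2 ^ u); have := expn_gt0 2 h.+1; lia.
  have : 2 ^ e <= j + 2 ^ h.+1.
    by rewrite je; apply: leq_trans (leq_addr _ _); rewrite leq_pmull.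
  clear je lo0 xs xt; lia.
-
  move=> [s [i2 [/andP[s1 s2] _ ei ej]]] x; split; first by case.
  move=> hx; split => //; case: hx => t ->.
  have ha : i + P = j * 2 ^ s.
    rewrite ei ej mulnDl -expnD subnK; last by lia.
    by rewrite mulnC.
  exists (t + (m * s - s)); rewrite ha -mulnA -expnD.
  have -> : s + (t + (m * s - s)) = t + m * s.
    have : s <= m * s by rewrite leq_pmull.
    lia.
  by rewrite (expnD 2 t (m * s)) mulnA -(modnMmr (j * 2 ^ t)) pow_mk modnMmr muln1.
-
  move=> ncond x [[s xs] [t xt]]; apply: ncond.
  have : ((i + P) * 2 ^ s) %% cyc_v m = (j * 2 ^ t) %% cyc_v m by rewrite -xs -xt.
  case/norm_cyc => // e [em je]; rewrite rot_cyc // in je.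
  have [eh|eh] := leqP e h.
    exfalso.
    have : 2 ^ h.+1 <= 2 ^ (m - e) by rewrite leq_exp2l //; lia.
    move=> hu; rewrite modn_small ?divn_small ?addn0 in je; try lia.
    have : i + P <= (i + P) * 2 ^ e by rewrite leq_pmulr // expn_gt0.
    lia.
  have ue : m - e <= h by lia.
  have ue1 : 1 <= m - e by lia.
  set u := m - e in je ue ue1.
  have ge : 2 ^ h.+1 <= 2 ^ e by rewrite leq_exp2l.
  case: (posnP ((i + P) %% 2 ^ u)) => lo0; last first.
    have : 2 ^ e <= j.
      by rewrite je; apply: leq_trans (leq_addr _ _); rewrite leq_pmull.
    clear je lo0 xs xt; lia.
  rewrite lo0 mul0n add0n in je.
  have du : 2 ^ u %| i + P by rewrite /dvdn lo0.
  have duP : 2 ^ u %| P by apply: dvdn_exp2l.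
  have di : 2 ^ u %| i by rewrite -(dvdn_addl i duP).
  rewrite divnDl // /P -expnB // in je.
  have ui : 2 ^ u <= i by apply: dvdn_leq; lia.
  have uh : u < h - 1.
    rewrite -(ltn_exp2l _ _ (isT : 1 < 2)); apply: (leq_ltn_trans ui).
    have := expn_gt0 2 (h - 1); clear -iA; lia.
  have iK : i %/ 2 ^ u * 2 ^ u = i by rewrite divnK.
  exists u, (i %/ 2 ^ u); split.
  + apply/andP; split; clear -ue1 uh; lia.
  + apply/and3P; split.
    * move: jodd; rewrite je oddD oddX.
      have -> : (h - u == 0) = false by apply/eqP; clear -uh; lia.
      by rewrite /= addbF.
    * by rewrite divn_gt0 // expn_gt0.
    * have : i %/ 2 ^ u * 2 ^ u < 2 ^ (h - 1 - u) * 2 ^ u.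
        rewrite iK -expnD subnK; last by clear -uh; lia.
        have := expn_gt0 2 (h - 1); clear -iA; lia.
      rewrite ltn_pmul2r ?expn_gt0 //; clear; lia.
  + by rewrite mulnC iK.
  + exact: je.
Qed.
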